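(* For all $n\ge 2$, $HT_n=\ker(\varphi_{HT})$ is isomorphic to $HL_n=\ker(\psi_H)$.
   Context: For $n\ge 2$, the twisted virtual braid group $TVB_n$ is the group with generators $\sigma_1,\dots,\sigma_{n-1}$, $\rho_1,\dots,\rho_{n-1}$, $\gamma_1,\dots,\gamma_n$ and defining relations: $\sigma_i\sigma_{i+1}\sigma_i=\sigma_{i+1}\sigma_i\sigma_{i+1}$ ($1\le i\le n-2$); $\sigma_i\sigma_j=\sigma_j\sigma_i$ ($|i-j|\ge 2$); $\rho_i^2=1$; $\rho_i\rho_j=\rho_j\rho_i$ ($|i-j|\ge2$); $\rho_i\rho_{i+1}\rho_i=\rho_{i+1}\rho_i\rho_{i+1}$ ($1\le i\le n-2$); $\sigma_i\rho_j=\rho_j\sigma_i$ ($|i-j|\ge 2$); $\rho_i\rho_{i+1}\sigma_i=\sigma_{i+1}\rho_i\rho_{i+1}$ ($1\le i\le n-2$); $\gamma_i^2=1$ and $\gamma_i\gamma_j=\gamma_j\gamma_i$ (all $i,j$); $\gamma_j\rho_i=\rho_i\gamma_j$ and $\gamma_j\sigma_i=\sigma_i\gamma_j$ for $j\notin\{i,i+1\}$; $\rho_i\gamma_i=\gamma_{i+1}\rho_i$ ($1\le i\le n-1$); $\rho_i\sigma_i\rho_i=\gamma_{i+1}\gamma_i\sigma_i\gamma_i\gamma_{i+1}$ ($1\le i\le n-1$). $TVH_n$ is the kernel of $\varphi_H:TVB_n\to S_n$, $\sigma_i\mapsto e$, $\rho_i\mapsto(i,i+1)$, $\gamma_j\mapsto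 e$. In $TVB_n$ define $x_{i,i+1}=\sigma_i$, $x_{i+1,i}=\rho_i\sigma_i\rho_i$ ($1\le i\le n-1$), and for $1\le i<j-1\le n-1$: $x_{ij}=\rho_{j-1}\cdots\rho_{i+1}\sigma_i\rho_{i+1}\cdots\rho_{j-1}$, $x_{ji}=\rho_{j-1}\cdots\rho_{i+1}\rho_i\sigma_i\rho_i\rho_{i+1}\cdots\rho_{j-1}$; these together with the $\gamma_j$ generate $TVH_n$. $A_n=\langle\gamma_1,\dots,\gamma_n\rangle$; $\psi_H:TVH_n\to A_n$ is the homomorphism with $x_{kl}\mapsto e$, $\gamma_j\mapsto\gamma_j$; $HL_n=\ker\psi_H$. $TS_n=\langle\rho_1,\dots,\rho_{n-1},\gamma_1,\dots,\gamma_n\rangle\le TVB_n$, and $\varphi_{HT}:TVB_n\to TS_n$ is the homomorphism $\sigma_i\mapsto e$, $\rho_i\mapsto\rho_i$, $\gamma_j\mapsto\gamma_j$; $HT_n=\ker\varphi_{HT}$. *)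

(* Defs.v *)
(* Groups given by presentations are modelled by words over
   the generators, modulo the congruence generated by free cancellation and
   the defining relations.  Indices are 1-based as in the paper. *)
From Stdlib Require Import List Arith.
Import ListNotations.

Inductive gen : Type :=
| Sg : nat -> gen
| Rh : nat -> gen
| Ga : nat -> gen.

(* a letter: generator together with an exponent sign (true = inverse) *)
Definition letter := (gen * bool)%type.
Definition word := list letter.

Definition s (i : nat) : word := [(Sg i, false)].
Definition r (i : nat) : word := [(Rh i, false)].
Definition g (j : nat) : word := [(Ga j, false)].

Definition flip (x : letter) : letter := (fst x, negb (snd x)).

Definition valid_gen (n : nat) (x : gen) : Prop :=
  match x with
  | Sg i => 1 <= i <= n - 1
  | Rh i => 1 <= i <= n - 1
  | Ga j => 1 <= j <= n
  end.

Definition wf (n : nat) (w : word) : Prop := Forall (fun x => valid_gen n (fst x)) w.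

Definition far (i j : nat) : Prop := i + 2 <= j \/ j + 2 <= i.

Inductive rel (n : nat) : word -> word -> Prop :=
| R_sbraid i : 1 <= i <= n - 2 ->
    rel n (s i ++ s (i+1) ++ s i) (s (i+1) ++ s i ++ s (i+1))
| R_scomm i j : 1 <= i <= n - 1 -> 1 <= j <= n - 1 -> far i j ->
    rel n (s i ++ s j) (s j ++ s i)
| R_rsq i : 1 <= i <= n - 1 -> rel n (r i ++ r i) []
| R_rcomm i j : 1 <= i <= n - 1 -> 1 <= j <= n - 1 -> far i j ->
    rel n (r i ++ r j) (r j ++ r i)
| R_rbraid i : 1 <= i <= n - 2 ->
    rel n (r i ++ r (i+1) ++ r i) (r (i+1) ++ r i ++ r (i+1))
| R_srcomm i j : 1 <= i <= n - 1 -> 1 <= j <= n - 1 -> far i j ->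
    rel n (s i ++ r j) (r j ++ s i)
| R_mixed i : 1 <= i <= n - 2 ->
    rel n (r i ++ r (i+1) ++ s i) (s (i+1) ++ r i ++ r (i+1))
| R_gsq j : 1 <= j <= n -> rel n (g j ++ g j) []
| R_gcomm i j : 1 <= i <= n -> 1 <= j <= n -> rel n (g i ++ g j) (g j ++ g i)
| R_grcomm i j : 1 <= i <= n - 1 -> 1 <= j <= n -> j <> i -> j <> i + 1 ->
    rel n (g j ++ r i) (r i ++ g j)
| R_gscomm i j : 1 <= i <= n - 1 -> 1 <= j <= n -> j <> i -> j <> i + 1 ->
    rel n (g j ++ s i) (s i ++ g j)
| R_rg i : 1 <= i <= n - 1 -> rel n (r i ++ g i) (g (i+1) ++ r i)
| R_rsr i : 1 <= i <= n - 1 ->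
    rel n (r i ++ s i ++ r i) (g (i+1) ++ g i ++ s i ++ g i ++ g (i+1)).

Inductive eqv (n : nat) : word -> word -> Prop :=
| E_refl w : eqv n w w
| E_sym w w' : eqv n w w' -> eqv n w' w
| E_trans w1 w2 w3 : eqv n w1 w2 -> eqv n w2 w3 -> eqv n w1 w3
| E_ctx u v w w' : eqv n w w' -> eqv n (u ++ w ++ v) (u ++ w' ++ v)
| E_free x : eqv n [x; flip x] []
| E_rel l r : rel n l r -> eqv n l r.

Definition swap (i k : nat) : nat :=
  if Nat.eqb k i then i + 1 else if Nat.eqb k (i + 1) then i else k.

Definition act (x : letter) (k : nat) : nat :=
  match fst x with Rh i => swap i k | _ => k end.

Definition permOf (w : word) : nat -> nat :=
  fold_right (fun x f => fun k => act x (f k)) (fun k => k) w.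

Definition TVH (n : nat) (w : word) : Prop :=
  wf n w /\ forall k, 1 <= k <= n -> permOf w k = k.

(* phi_HT : TVB_n -> TS_n <= TVB_n  (sigma_i |-> e); HT_n its kernel *)
Definition is_sigma (x : letter) : bool :=
  match fst x with Sg _ => true | _ => false end.

Definition phiHT (w : word) : word := filter (fun x => negb (is_sigma x)) w.

Definition HT (n : nat) (w : word) : Prop := wf n w /\ eqv n (phiHT w) [].

Definition rup (a b : nat) : word := map (fun k => (Rh k, false)) (seq a (b - a)).

(* x_{ij} for i < j :  rho_{j-1}...rho_{i+1} sigma_i rho_{i+1}...rho_{j-1} *)
Definition x_up (i j : nat) : word := rev (rup (i+1) j) ++ s i ++ rup (i+1) j.
(* x_{ji} for i < j :  rho_{j-1}...rho_i sigma_i rho_i...rho_{j-1} *)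
Definition x_down (i j : nat) : word := rev (rup i j) ++ s i ++ rup i j.

Definition is_gamma (x : letter) : Prop := match fst x with Ga _ => True | _ => False end.
Definition A (n : nat) (w : word) : Prop :=
  exists v, wf n v /\ Forall is_gamma v /\ eqv n w v.

Definition is_psiH (n : nat) (psi : word -> word) : Prop :=
  (forall w w', TVH n w -> TVH n w' -> eqv n w w' -> eqv n (psi w) (psi w')) /\
  (forall w w', TVH n w -> TVH n w' -> eqv n (psi (w ++ w')) (psi w ++ psi w')) /\
  (forall w, TVH n w -> A n (psi w)) /\
  (forall i j, 1 <= i -> i < j -> j <= n ->
     eqv n (psi (x_up i j)) [] /\ eqv n (psi (x_down i j)) []) /\
  (forall j, 1 <= j <= n -> eqv n (psi (g j)) (g j)).

Definition HL (n : nat) (psi : word -> word) (w : word) : Prop :=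
  TVH n w /\ eqv n (psi w) [].

Definition subgroup_iso (n : nat) (H K : word -> Prop) : Prop :=
  exists f : word -> word,
    (forall w, H w -> K (f w)) /\
    (forall w w', H w -> H w' -> eqv n w w' -> eqv n (f w) (f w')) /\
    (forall w w', H w -> H w' -> eqv n (f (w ++ w')) (f w ++ f w')) /\
    (forall w w', H w -> H w' -> eqv n (f w) (f w') -> eqv n w w') /\
    (forall v, K v -> exists w, H w /\ eqv n (f w) v).

(* Main.v *)
Require Import Defs.
From Stdlib Require Import List Arith Lia Setoid Morphisms.
Import ListNotations.

#[export] Instance eqv_Equiv n : Equivalence (eqv n).
Proof. split; [intros x; apply E_refl | intros x y; apply E_sym | intros x y z; apply E_trans]. Qed.

Lemma eqv_app_l n u w w' : eqv n w w' -> eqv n (u ++ w) (u ++ w').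
Proof. intro H. pose proof (E_ctx n u [] w w' H) as H0. rewrite !app_nil_r in H0. exact H0. Qed.
Lemma eqv_app_r n v w w' : eqv n w w' -> eqv n (w ++ v) (w' ++ v).
Proof. intro H. exact (E_ctx n [] v w w' H). Qed.

#[export] Instance app_Proper n : Proper (eqv n ==> eqv n ==> eqv n) (@app letter).
Proof. intros a b H c d H'. transitivity (a ++ d). apply eqv_app_l; auto. apply eqv_app_r; auto. Qed.
#[export] Instance cons_Proper n x : Proper (eqv n ==> eqv n) (cons x).
Proof. intros a b H. exact (eqv_app_l n [x] a b H). Qed.

Definition Rl (m : nat) : letter := (Rh m, false).
Definition Gl (m : nat) : letter := (Ga m, false).
Definition Sl (m : nat) : letter := (Sg m, false).

Lemma rel_t n l r0 t : rel n l r0 -> eqv n (l ++ t) (r0 ++ t).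
Proof. intro H. apply eqv_app_r. apply E_rel. exact H. Qed.

Ltac relt H t := let H' := fresh in pose proof (rel_t _ _ _ t H) as H';
  unfold r, s, g in H'; simpl in H'; exact H'.

Lemma rr n i t : 1 <= i <= n - 1 -> eqv n (Rl i :: Rl i :: t) t.
Proof. intro H. relt (R_rsq n i H) t. Qed.
Lemma gg n i t : 1 <= i <= n -> eqv n (Gl i :: Gl i :: t) t.
Proof. intro H. relt (R_gsq n i H) t. Qed.
Lemma free_t n x t : eqv n (x :: flip x :: t) t.
Proof. exact (eqv_app_r n t _ _ (E_free n x)). Qed.

Lemma rbraid n i t : 1 <= i <= n - 2 ->
  eqv n (Rl i :: Rl (i+1) :: Rl i :: t) (Rl (i+1) :: Rl i :: Rl (i+1) :: t).
Proof. intro H. relt (R_rbraid n i H) t. Qed.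
Lemma rrfar n i j t : 1 <= i <= n - 1 -> 1 <= j <= n - 1 -> far i j ->
  eqv n (Rl i :: Rl j :: t) (Rl j :: Rl i :: t).
Proof. intros H1 H2 H3. relt (R_rcomm n i j H1 H2 H3) t. Qed.
Lemma srfar n i j t : 1 <= i <= n - 1 -> 1 <= j <= n - 1 -> far i j ->
  eqv n (Sl i :: Rl j :: t) (Rl j :: Sl i :: t).
Proof. intros H1 H2 H3. relt (R_srcomm n i j H1 H2 H3) t. Qed.
Lemma mixed n i t : 1 <= i <= n - 2 ->
  eqv n (Rl i :: Rl (i+1) :: Sl i :: t) (Sl (i+1) :: Rl i :: Rl (i+1) :: t).
Proof. intro H. relt (R_mixed n i H) t. Qed.
Lemma rg n i t : 1 <= i <= n - 1 -> eqv n (Rl i :: Gl i :: t) (Gl (i+1) :: Rl i :: t).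
Proof. intro H. relt (R_rg n i H) t. Qed.
Lemma grcomm n i j t : 1 <= i <= n - 1 -> 1 <= j <= n -> j <> i -> j <> i + 1 ->
  eqv n (Gl j :: Rl i :: t) (Rl i :: Gl j :: t).
Proof. intros H1 H2 H3 H4. relt (R_grcomm n i j H1 H2 H3 H4) t. Qed.

Lemma rinv n i t : 1 <= i <= n - 1 -> eqv n ((Rh i, true) :: t) (Rl i :: t).
Proof. intro H. rewrite <- (rr n i t H) at 1.
  rewrite (free_t n (Rh i, true) (Rl i :: t)). reflexivity. Qed.
Lemma ginv n i t : 1 <= i <= n -> eqv n ((Ga i, true) :: t) (Gl i :: t).
Proof. intro H. rewrite <- (gg n i t H) at 1.
  rewrite (free_t n (Ga i, true) (Gl i :: t)). reflexivity. Qed.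

Definition inv (w : word) : word := rev (map flip w).

Lemma inv_app u v : inv (u ++ v) = inv v ++ inv u.
Proof. unfold inv. rewrite map_app, rev_app_distr. reflexivity. Qed.
Lemma flip_flip x : flip (flip x) = x.
Proof. destruct x as [a b]; unfold flip; simpl; rewrite Bool.negb_involutive; reflexivity. Qed.
Lemma inv_inv w : inv (inv w) = w.
Proof. unfold inv. rewrite map_rev, rev_involutive, map_map.
  rewrite (map_ext _ (fun x => x)) by apply flip_flip. rewrite map_id; reflexivity. Qed.

Lemma inv_cancel n w t : eqv n (w ++ inv w ++ t) t.
Proof. revert t; induction w as [|a w IH]; intro t; simpl. reflexivity.
  unfold inv; simpl. rewrite <- !app_assoc. simpl. fold (inv w).
  rewrite (IH (flip a :: t)). apply free_t. Qed.
Lemma inv_cancel' n w t : eqv n (inv w ++ w ++ t) t.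
Proof. pose proof (inv_cancel n (inv w) t) as H. rewrite inv_inv in H. exact H. Qed.

Lemma permOf_app u v k : permOf (u ++ v) k = permOf u (permOf v k).
Proof. induction u; simpl; [reflexivity|]. rewrite IHu; reflexivity. Qed.

Ltac swapt := unfold swap; repeat (match goal with |- context [Nat.eqb ?a ?b] =>
  lazymatch a with context [if _ then _ else _] => fail | _ =>
  lazymatch b with context [if _ then _ else _] => fail | _ => destruct (Nat.eqb_spec a b) end end end; cbn iota); lia.

Lemma swap_swap i k : swap i (swap i k) = k.
Proof. swapt. Qed.

Lemma perm_eqv n w w' : eqv n w w' -> forall k, permOf w k = permOf w' k.
Proof.
  induction 1; intros k; try congruence.
  - rewrite !permOf_app. rewrite IHeqv. reflexivity.
  - destruct x as [[i|i|i] b]; simpl; unfold act; simpl; try reflexivity. apply swap_swap.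
  - destruct H; unfold Defs.r, Defs.s, Defs.g; simpl; unfold act; simpl; try reflexivity; try apply swap_swap;
    try (destruct H1; swapt); swapt.
Qed.

Lemma phiHT_app u v : phiHT (u ++ v) = phiHT u ++ phiHT v.
Proof. unfold phiHT. apply filter_app. Qed.

Lemma phiHT_eqv n w w' : eqv n w w' -> eqv n (phiHT w) (phiHT w').
Proof.
  induction 1.
  - reflexivity.
  - symmetry; auto.
  - etransitivity; eauto.
  - rewrite !phiHT_app. rewrite IHeqv. reflexivity.
  - destruct x as [[i|i|i] b]; simpl; try reflexivity; apply E_free.
  - destruct H; unfold Defs.r, Defs.s, Defs.g; simpl; try reflexivity;
    try (apply E_rel; constructor; auto; fail).
    + pose proof (rr n i [] H). pose proof (gg n (i+1) [] ltac:(lia)).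
      pose proof (gg n i (Gl (i+1) :: []) ltac:(lia)). unfold Rl, Gl in *.
      rewrite H0. rewrite H2, H1. reflexivity.
Qed.

Definition U (a b : nat) : list nat := seq a (b - a).
Definition P (a b : nat) : list nat := rev (U a b).

Lemma U_lo a b : a < b -> U a b = a :: U (a+1) b.
Proof. intro H. unfold U. replace (b - a) with (S (b - (a+1))) by lia. simpl.
  replace (S a) with (a+1) by lia. reflexivity. Qed.
Lemma U_hi a b : a <= b -> U a (b+1) = U a b ++ [b].
Proof. intro H. unfold U. replace (b + 1 - a) with (S (b - a)) by lia. rewrite seq_S.
  f_equal. f_equal. lia. Qed.
Lemma P_lo a b : a < b -> P a b = P (a+1) b ++ [a].
Proof. intro H. unfold P. rewrite U_lo by exact H. reflexivity. Qed.
Lemma P_hi a b : a <= b -> P a (b+1) = b :: P a b.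
Proof. intro H. unfold P. rewrite U_hi by exact H. rewrite rev_app_distr. reflexivity. Qed.
Lemma U_nil a : U a a = [].
Proof. unfold U. rewrite Nat.sub_diag. reflexivity. Qed.
Lemma P_nil a : P a a = [].
Proof. unfold P. rewrite U_nil. reflexivity. Qed.
Lemma U_in a b k : In k (U a b) -> a <= k < b.
Proof. unfold U. rewrite in_seq. lia. Qed.
Lemma P_in a b k : In k (P a b) -> a <= k < b.
Proof. unfold P. rewrite <- in_rev. apply U_in. Qed.

Lemma comm_list n a (l : word) t :
  (forall y t', In y l -> eqv n (a :: y :: t') (y :: a :: t')) ->
  eqv n (a :: l ++ t) (l ++ a :: t).
Proof. revert t; induction l as [|y l IH]; intros t H; simpl. reflexivity.
  rewrite H by (left; reflexivity). rewrite IH. reflexivity. intros; apply H; right; auto. Qed.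

Lemma R_comm n m l t : 1 <= m <= n - 1 ->
  (forall k, In k l -> 1 <= k <= n - 1 /\ far m k) ->
  eqv n (Rl m :: map Rl l ++ t) (map Rl l ++ Rl m :: t).
Proof. intros Hm H. apply comm_list. intros y t' Hy. apply in_map_iff in Hy.
  destruct Hy as [k [<- Hk]]. destruct (H k Hk). apply rrfar; auto. Qed.
Lemma S_comm n m l t : 1 <= m <= n - 1 ->
  (forall k, In k l -> 1 <= k <= n - 1 /\ far m k) ->
  eqv n (Sl m :: map Rl l ++ t) (map Rl l ++ Sl m :: t).
Proof. intros Hm H. apply comm_list. intros y t' Hy. apply in_map_iff in Hy.
  destruct Hy as [k [<- Hk]]. destruct (H k Hk). apply srfar; auto. Qed.

Lemma cancel_map n (f : nat -> letter) (Q : nat -> Prop)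
  (Hf : forall k t, Q k -> eqv n (f k :: f k :: t) t) l t :
  (forall k, In k l -> Q k) -> eqv n (map f (rev l) ++ map f l ++ t) t.
Proof. revert t; induction l as [|a l IH]; intros t H; simpl. reflexivity.
  rewrite map_app, <- app_assoc. simpl. rewrite Hf by (apply H; left; auto).
  apply IH. intros; apply H; right; auto. Qed.

Lemma R_cancel n l t : (forall k, In k l -> 1 <= k <= n - 1) ->
  eqv n (map Rl (rev l) ++ map Rl l ++ t) t.
Proof. apply (cancel_map n Rl (fun k => 1 <= k <= n - 1)). intros; apply rr; auto. Qed.
Lemma R_cancel' n l t : (forall k, In k l -> 1 <= k <= n - 1) ->
  eqv n (map Rl l ++ map Rl (rev l) ++ t) t.
Proof. intro H. rewrite <- (rev_involutive l) at 1. apply R_cancel.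
  intros k Hk; apply H; apply in_rev; auto. Qed.
Lemma G_cancel' n l t : (forall k, In k l -> 1 <= k <= n) ->
  eqv n (map Gl l ++ map Gl (rev l) ++ t) t.
Proof. intro H. rewrite <- (rev_involutive l) at 1. apply (cancel_map n Gl (fun k => 1 <= k <= n)).
  intros; apply gg; auto. intros k Hk; apply H; apply in_rev; auto. Qed.

Lemma PL n a m b t : 1 <= a <= m -> m + 2 <= b -> b <= n ->
  eqv n (Rl m :: map Rl (P a b) ++ t) (map Rl (P a b) ++ Rl (m+1) :: t).
Proof.
  intros Ha Hb Hn. remember (b - (m+2)) as d. revert b Hb Hn Heqd.
  induction d as [|d IH]; intros b Hb Hn Hd.
  - replace b with (m+1+1) by lia. rewrite P_hi by lia. rewrite P_hi by lia. simpl.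
    rewrite rbraid by lia. apply cons_Proper, cons_Proper. apply R_comm. lia.
    intros k Hk. apply P_in in Hk. split. lia. unfold far; lia.
  - replace b with ((b - 1) + 1) by lia. rewrite P_hi by lia. simpl.
    rewrite rrfar by (unfold far; lia). apply cons_Proper. apply IH; lia.
Qed.

Lemma UL n a m b t : 1 <= a <= m -> m + 2 <= b -> b <= n ->
  eqv n (map Rl (U a b) ++ Rl m :: t) (Rl (m+1) :: map Rl (U a b) ++ t).
Proof.
  intros Ha Hb Hn.
  assert (HU : forall k, In k (U a b) -> 1 <= k <= n - 1) by (intros k Hk; apply U_in in Hk; lia).
  pose proof (PL n a m b (map Rl (U a b) ++ t) Ha Hb Hn) as H. unfold P in H.
  rewrite (R_cancel n _ t HU) in H.
  rewrite H. rewrite R_cancel'. reflexivity. exact HU.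
Qed.

Lemma rho_gamma n m j t : 1 <= m <= n - 1 -> 1 <= j <= n ->
  eqv n (Rl m :: Gl j :: t) (Gl (swap m j) :: Rl m :: t).
Proof.
  intros Hm Hj. unfold swap. destruct (Nat.eqb_spec j m).
  - subst. apply rg; auto.
  - destruct (Nat.eqb_spec j (m+1)).
    + subst. cbn iota. transitivity (Rl m :: Gl (m+1) :: Rl m :: Rl m :: t).
      rewrite (rr n m t Hm). reflexivity.
      rewrite <- (rg n m (Rl m :: t) Hm). rewrite rr by auto. reflexivity.
    + cbn iota. symmetry. apply grcomm; auto.
Qed.

Lemma swap_range n m j : 1 <= m <= n - 1 -> 1 <= j <= n -> 1 <= swap m j <= n.
Proof. intros. unfold swap. destruct (Nat.eqb_spec j m); [lia|]. destruct (Nat.eqb_spec j (m+1)); lia. Qed.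

Lemma rho_GW n m l t : 1 <= m <= n - 1 -> (forall j, In j l -> 1 <= j <= n) ->
  eqv n (Rl m :: map Gl l ++ t) (map Gl (map (swap m) l) ++ Rl m :: t).
Proof. intros Hm. revert t; induction l as [|j l IH]; intros t Hl; simpl. reflexivity.
  rewrite rho_gamma by (auto; apply Hl; left; auto). apply cons_Proper. apply IH.
  intros; apply Hl; right; auto. Qed.

Lemma cstep n m : 1 <= m <= n -> forall p, (forall i, In i p -> 1 <= i <= m - 1) ->
  exists p' k, (forall i, In i p' -> 1 <= i <= m - 2) /\ 1 <= k <= m /\
    eqv n (map Rl p) (map Rl p' ++ map Rl (P k m)).
Proof.
  intros Hm p. induction p as [|i p IH] using rev_ind; intros Hp.
  - exists [], m. split. simpl; tauto. split. lia. rewrite P_nil. reflexivity.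
  - destruct IH as [p' [k [H1 [H2 H3]]]]. intros; apply Hp, in_or_app; auto.
    assert (Hi : 1 <= i <= m - 1) by (apply Hp, in_or_app; right; left; auto).
    assert (E : eqv n (map Rl (p ++ [i])) (map Rl p' ++ map Rl (P k m) ++ [Rl i])).
    { rewrite map_app, H3. rewrite <- app_assoc. reflexivity. }
    destruct (le_lt_dec (i+2) k) as [c1|c1].
    + exists (p' ++ [i]), k. split. intros x Hx. apply in_app_or in Hx. destruct Hx as [Hx|[<-|[]]]; [apply H1; auto| lia].
      split. lia. rewrite E. rewrite <- R_comm. rewrite map_app, <- app_assoc. simpl. rewrite app_nil_r. reflexivity. lia.
      intros x Hx. apply P_in in Hx. unfold far. lia.
    + destruct (Nat.eq_dec (i+1) k) as [c2|c2].
      * exists p', i. split. auto. split. lia. rewrite E. rewrite (P_lo i m) by lia. rewrite c2, !map_app. reflexivity.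
      * destruct (Nat.eq_dec i k) as [c3|c3].
        -- subst k. exists p', (i+1). split. auto. split. lia.
           rewrite E. rewrite (P_lo i m) by lia. rewrite map_app, <- app_assoc. simpl. rewrite rr by lia. rewrite app_nil_r. reflexivity.
        -- exists (p' ++ [i-1]), k. split. intros x Hx. apply in_app_or in Hx. destruct Hx as [Hx|[<-|[]]]; [apply H1; auto| lia].
           split. lia. pose proof (PL n k (i-1) m [] ltac:(lia) ltac:(lia) ltac:(lia)) as HP.
           replace (i - 1 + 1) with i in HP by lia. rewrite E, <- HP.
           rewrite map_app, <- app_assoc. simpl. rewrite app_nil_r. reflexivity.
Qed.

Lemma perm_fix l x : (forall i, In i l -> x <> i /\ x <> i + 1) -> permOf (map Rl l) x = x.
Proof. induction l as [|i l IH]; intros H; simpl. reflexivity.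
  rewrite IH by (intros; apply H; right; auto). unfold act, swap; simpl.
  destruct (H i (or_introl eq_refl)). destruct (Nat.eqb_spec x i); [lia|]. destruct (Nat.eqb_spec x (i+1)); lia. Qed.

Lemma perm_P k m : k <= m -> permOf (map Rl (P k m)) k = m.
Proof. intro H. induction m as [|m IH]. replace k with 0 by lia. reflexivity.
  destruct (Nat.eq_dec k (S m)). subst. rewrite P_nil. reflexivity.
  replace (S m) with (m+1) by lia. rewrite P_hi by lia. simpl. rewrite IH by lia.
  unfold act, swap; simpl. rewrite Nat.eqb_refl. reflexivity. Qed.

Lemma cox n m : m <= n -> forall p, (forall i, In i p -> 1 <= i <= m - 1) ->
  (forall x, 1 <= x <= m -> permOf (map Rl p) x = x) -> eqv n (map Rl p) [].
Proof.
  induction m as [|m IH]; intros Hmn p Hp Hperm.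
  - destruct p as [|i p]. reflexivity. specialize (Hp i (or_introl eq_refl)). lia.
  - destruct (Nat.eq_dec m 0) as [->|Hm0].
    + destruct p as [|i p]. reflexivity. specialize (Hp i (or_introl eq_refl)). lia.
    + destruct (cstep n (S m) ltac:(lia) p Hp) as [p' [k [H1 [H2 H3]]]].
      assert (Hk : k = S m).
      { pose proof (perm_eqv n _ _ H3 k) as E. rewrite permOf_app, perm_P in E by lia.
        rewrite (perm_fix p') in E. rewrite Hperm in E by lia. auto.
        intros i Hi. specialize (H1 i Hi). lia. }
      subst k. rewrite P_nil, app_nil_r in H3. rewrite H3. apply IH. lia.
      intros i Hi; specialize (H1 i Hi); lia.
      intros x Hx. rewrite <- (perm_eqv n _ _ H3 x). apply Hperm. lia.
Qed.

Lemma xup_eq i j : x_up i j = map Rl (P (i+1) j) ++ Sl i :: map Rl (U (i+1) j).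
Proof. unfold x_up, P. change (rup (i+1) j) with (map Rl (U (i+1) j)). rewrite map_rev. reflexivity. Qed.
Lemma xdown_eq i j : x_down i j = map Rl (P i j) ++ Sl i :: map Rl (U i j).
Proof. unfold x_down, P. change (rup i j) with (map Rl (U i j)). rewrite map_rev. reflexivity. Qed.

Lemma loc1 n a t : 1 <= a <= n - 2 ->
  eqv n (Rl a :: Sl (a+1) :: Rl a :: t) (Rl (a+1) :: Sl a :: Rl (a+1) :: t).
Proof. intro H.
  transitivity (Rl a :: Sl (a+1) :: Rl a :: Rl (a+1) :: Rl (a+1) :: t).
  { rewrite (rr n (a+1) t) by lia. reflexivity. }
  rewrite <- (mixed n a (Rl (a+1) :: t)) by lia. rewrite (rr n a) by lia. reflexivity. Qed.

Lemma loc2 n a t : 1 <= a <= n - 2 ->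
  eqv n (Rl a :: Rl (a+1) :: Sl a :: Rl (a+1) :: Rl a :: t) (Sl (a+1) :: t).
Proof. intro H. rewrite (mixed n a) by lia. rewrite (rr n (a+1)) by lia. rewrite (rr n a) by lia. reflexivity. Qed.

Lemma loc3 n a t : 1 <= a <= n - 2 ->
  eqv n (Rl a :: Rl (a+1) :: Sl (a+1) :: Rl (a+1) :: Rl a :: t)
        (Rl (a+1) :: Rl a :: Sl a :: Rl a :: Rl (a+1) :: t).
Proof. intro H. symmetry.
  transitivity (Rl (a+1) :: Rl a :: Rl (a+1) :: Rl a :: Sl (a+1) :: Rl a :: Rl (a+1) :: Rl a :: Rl (a+1) :: t).
  { rewrite <- (mixed n a (Rl a :: Rl (a+1) :: t)) by lia.
    rewrite (rr n a) by lia. rewrite (rr n (a+1)) by lia. reflexivity. }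
  rewrite <- (rbraid n a (Rl a :: Sl (a+1) :: Rl a :: Rl (a+1) :: Rl a :: Rl (a+1) :: t)) by lia.
  rewrite (rr n a) by lia. rewrite (rbraid n a (Rl (a+1) :: t)) by lia.
  rewrite (rr n (a+1) t) by lia. reflexivity. Qed.

Lemma loc4 n a t : 1 <= a <= n - 2 ->
  eqv n (Rl a :: Rl (a+1) :: Rl a :: Sl a :: Rl a :: Rl (a+1) :: Rl a :: t)
        (Rl (a+1) :: Sl (a+1) :: Rl (a+1) :: t).
Proof. intro H. rewrite (rbraid n a (Sl a :: _)) by lia. rewrite (rbraid n a t) by lia.
  rewrite (loc2 n a (Rl (a+1) :: t)) by lia. reflexivity. Qed.

Ltac rng := first [ intros k Hk; apply U_in in Hk; split; [lia | unfold far; lia]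
                  | intros k Hk; apply P_in in Hk; split; [lia | unfold far; lia] | lia ].

Lemma norm_x (L1 L2 : word) a t m : Rl m :: (L1 ++ a :: L2) ++ Rl m :: t = Rl m :: L1 ++ a :: L2 ++ Rl m :: t.
Proof. rewrite <- app_assoc. reflexivity. Qed.

Lemma x_far n m i l1 l2 t : 1 <= m <= n - 1 -> 1 <= i <= n - 1 -> far i m ->
  (forall k, In k l1 -> 1 <= k <= n - 1 /\ far m k) ->
  (forall k, In k l2 -> 1 <= k <= n - 1 /\ far m k) ->
  eqv n (Rl m :: (map Rl l1 ++ Sl i :: map Rl l2) ++ Rl m :: t) ((map Rl l1 ++ Sl i :: map Rl l2) ++ t).
Proof. intros Hm Hi Hf H1 H2. rewrite norm_x. rewrite <- (R_comm n m l2 t) by auto.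
  rewrite (srfar n i m) by auto. rewrite R_comm by auto. rewrite rr by auto.
  rewrite <- app_assoc. reflexivity. Qed.

Lemma x_shift n m i a b t : 1 <= i <= n - 1 -> 1 <= a <= m -> m + 2 <= b -> b <= n -> i + 2 <= m + 1 ->
  eqv n (Rl m :: (map Rl (P a b) ++ Sl i :: map Rl (U a b)) ++ Rl m :: t) ((map Rl (P a b) ++ Sl i :: map Rl (U a b)) ++ t).
Proof. intros. rewrite norm_x. rewrite (UL n a m b t) by lia. rewrite (PL n a m b) by lia.
  rewrite (srfar n i (m+1)) by (unfold far; lia). rewrite rr by lia. rewrite <- app_assoc. reflexivity. Qed.

Lemma up_b i j : i < j -> x_up i (j+1) = Rl j :: x_up i j ++ [Rl j].
Proof. intro. rewrite !xup_eq. rewrite P_hi, U_hi by lia. rewrite map_app. simpl. rewrite <- !app_assoc. reflexivity. Qed.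
Lemma down_b i j : i < j -> x_down i (j+1) = Rl j :: x_down i j ++ [Rl j].
Proof. intro. rewrite !xdown_eq. rewrite P_hi, U_hi by lia. rewrite map_app. simpl. rewrite <- !app_assoc. reflexivity. Qed.

Lemma xup1 i : x_up i (i+1) = [Sl i].
Proof. rewrite xup_eq, P_nil, U_nil. reflexivity. Qed.
Lemma xdown1 i : x_down i (i+1) = [Rl i; Sl i; Rl i].
Proof. rewrite xdown_eq. rewrite P_hi, U_hi, P_nil, U_nil by lia. reflexivity. Qed.

Definition X n (x : word) := exists i j, 1 <= i /\ i < j /\ j <= n /\ (x = x_up i j \/ x = x_down i j).

Lemma rx_up n m i j t : 1 <= m <= n - 1 -> 1 <= i -> i < j -> j <= n ->
  exists x', X n x' /\ eqv n (Rl m :: x_up i j ++ Rl m :: t) (x' ++ t).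
Proof.
  intros Hm Hi Hij Hj.
  assert (C : m + 2 <= i \/ (m + 1 = i) \/ (m = i /\ j = i + 1) \/ (m = i /\ i + 2 <= j)
     \/ (i + 1 <= m /\ m + 2 <= j) \/ (m + 1 = j /\ i < m) \/ m = j \/ j + 1 <= m) by lia.
  destruct C as [C|[C|[C|[C|[C|[C|[C|C]]]]]]].
  - exists (x_up i j). split. exists i, j; auto. rewrite xup_eq. apply x_far; try rng. unfold far; lia.
  - subst i. exists (x_up m j). split. exists m, j. repeat split; auto; lia.
    rewrite !xup_eq. rewrite norm_x. replace (m+1+1) with (m+2) by lia.
    rewrite (P_lo (m+1) j) by lia. rewrite (U_lo (m+1) j) by lia.
    replace (m+1+1) with (m+2) by lia. rewrite map_app, <- app_assoc. simpl.
    rewrite <- (R_comm n m (U (m+2) j) t) by rng. rewrite (R_comm n m (P (m+2) j)) by rng.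
    rewrite loc1 by lia. rewrite <- !app_assoc. reflexivity.
  - destruct C as [-> ->]. exists (x_down i (i+1)). split. exists i, (i+1). repeat split; auto; lia.
    rewrite xup1, xdown1. reflexivity.
  - destruct C as [-> C]. exists (x_up (i+1) j). split. exists (i+1), j. repeat split; auto; lia.
    rewrite !xup_eq. rewrite norm_x. rewrite (P_lo (i+1) j) by lia. rewrite (U_lo (i+1) j) by lia.
    rewrite map_app, <- app_assoc. simpl.
    rewrite <- (R_comm n i (U (i+1+1) j) t) by rng. rewrite (R_comm n i (P (i+1+1) j)) by rng.
    rewrite loc2 by lia. rewrite <- !app_assoc. reflexivity.
  - exists (x_up i j). split. exists i, j; auto. rewrite xup_eq. apply x_shift; lia.
  - destruct C as [<- C]. exists (x_up i m). split. exists i, m. repeat split; auto; lia.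
    rewrite up_b by lia. simpl. rewrite rr by lia. rewrite <- app_assoc. simpl. rewrite rr by lia. reflexivity.
  - subst m. exists (x_up i (j+1)). split. exists i, (j+1). repeat split; auto; lia.
    rewrite up_b by lia. simpl. rewrite <- app_assoc. reflexivity.
  - exists (x_up i j). split. exists i, j; auto. rewrite xup_eq. apply x_far; try rng. unfold far; lia.
Qed.

Lemma rx_down n m i j t : 1 <= m <= n - 1 -> 1 <= i -> i < j -> j <= n ->
  exists x', X n x' /\ eqv n (Rl m :: x_down i j ++ Rl m :: t) (x' ++ t).
Proof.
  intros Hm Hi Hij Hj.
  assert (C : m + 2 <= i \/ (m + 1 = i) \/ (m = i /\ j = i + 1) \/ (m = i /\ i + 2 <= j)
     \/ (i + 1 <= m /\ m + 2 <= j) \/ (m + 1 = j /\ i < m) \/ m = j \/ j + 1 <= m) by lia.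
  destruct C as [C|[C|[C|[C|[C|[C|[C|C]]]]]]].
  - exists (x_down i j). split. exists i, j; auto. rewrite xdown_eq. apply x_far; try rng. unfold far; lia.
  - subst i. exists (x_down m j). split. exists m, j. repeat split; auto; lia.
    rewrite !xdown_eq. rewrite norm_x.
    rewrite (P_lo m j) by lia. rewrite (U_lo m j) by lia.
    rewrite (P_lo (m+1) j) by lia. rewrite (U_lo (m+1) j) by lia.
    rewrite !map_app, <- !app_assoc. simpl.
    rewrite <- (R_comm n m (U (m+1+1) j) t) by rng. rewrite (R_comm n m (P (m+1+1) j)) by rng.
    rewrite loc3 by lia. reflexivity.
  - destruct C as [-> ->]. exists (x_up i (i+1)). split. exists i, (i+1). repeat split; auto; lia.
    rewrite xup1, xdown1. simpl. rewrite rr by lia. rewrite rr by lia. reflexivity.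
  - destruct C as [-> C]. exists (x_down (i+1) j). split. exists (i+1), j. repeat split; auto; lia.
    rewrite !xdown_eq. rewrite norm_x. rewrite (P_lo i j) by lia. rewrite (U_lo i j) by lia.
    rewrite (P_lo (i+1) j) by lia. rewrite (U_lo (i+1) j) by lia.
    rewrite !map_app, <- !app_assoc. simpl.
    rewrite <- (R_comm n i (U (i+1+1) j) t) by rng. rewrite (R_comm n i (P (i+1+1) j)) by rng.
    rewrite loc4 by lia. reflexivity.
  - exists (x_down i j). split. exists i, j; auto. rewrite xdown_eq. apply x_shift; lia.
  - destruct C as [<- C]. exists (x_down i m). split. exists i, m. repeat split; auto; lia.
    rewrite down_b by lia. simpl. rewrite rr by lia. rewrite <- app_assoc. simpl. rewrite rr by lia. reflexivity.
  - subst m. exists (x_down i (j+1)). split. exists i, (j+1). repeat split; auto; lia.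
    rewrite down_b by lia. simpl. rewrite <- app_assoc. reflexivity.
  - exists (x_down i j). split. exists i, j; auto. rewrite xdown_eq. apply x_far; try rng. unfold far; lia.
Qed.

Lemma rx n m x t : 1 <= m <= n - 1 -> X n x ->
  exists x', X n x' /\ eqv n (Rl m :: x ++ Rl m :: t) (x' ++ t).
Proof. intros Hm [i [j [H1 [H2 [H3 [-> | ->]]]]]]. apply rx_up; auto. apply rx_down; auto. Qed.

Definition nosig (u : word) := Forall (fun a => is_sigma a = false) u.

Lemma wf_app n u v : wf n u -> wf n v -> wf n (u ++ v).
Proof. unfold wf; intros; apply Forall_app; auto. Qed.
Lemma wf_app_inv n u v : wf n (u ++ v) -> wf n u /\ wf n v.
Proof. unfold wf; intros H; apply Forall_app in H; auto. Qed.
Lemma wf_G n l : (forall j, In j l -> 1 <= j <= n) -> wf n (map Gl l).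
Proof. intros H. unfold wf. apply Forall_forall. intros x Hx. apply in_map_iff in Hx.
  destruct Hx as [j [<- Hj]]. simpl. auto. Qed.
Lemma wf_R n l : (forall j, In j l -> 1 <= j <= n - 1) -> wf n (map Rl l).
Proof. intros H. unfold wf. apply Forall_forall. intros x Hx. apply in_map_iff in Hx.
  destruct Hx as [j [<- Hj]]. simpl. auto. Qed.

Lemma permOf_G l x : permOf (map Gl l) x = x.
Proof. induction l; simpl; auto. Qed.

Lemma nf n u : wf n u -> nosig u -> exists l p, (forall j, In j l -> 1 <= j <= n) /\
  (forall i, In i p -> 1 <= i <= n - 1) /\ eqv n u (map Gl l ++ map Rl p).
Proof.
  induction u as [|a u IH]; intros Hw Hs.
  - exists [], []. split. simpl; tauto. split. simpl; tauto. reflexivity.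
  - inversion Hw as [|? ? Ha Hw']; subst. inversion Hs as [|? ? Ha' Hs']; subst.
    destruct (IH Hw' Hs') as [l [p [H1 [H2 H3]]]].
    destruct a as [[i|i|i] b]; simpl in Ha, Ha'; try discriminate.
    + exists (map (swap i) l), (i :: p). split.
      { intros j Hj. apply in_map_iff in Hj. destruct Hj as [j0 [<- Hj0]]. apply swap_range; auto. }
      split. { intros k [<-|Hk]; auto. }
      transitivity (Rl i :: u). { destruct b. apply rinv; auto. reflexivity. }
      rewrite H3. rewrite rho_GW by auto. reflexivity.
    + exists (i :: l), p. split. { intros k [<-|Hk]; auto. } split. auto.
      transitivity (Gl i :: u). { destruct b. apply ginv; auto. reflexivity. }
      rewrite H3. reflexivity.
Qed.

Lemma triv n u : wf n u -> nosig u -> (forall x, 1 <= x <= n -> permOf u x = x) ->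
  exists l, (forall j, In j l -> 1 <= j <= n) /\ eqv n u (map Gl l).
Proof.
  intros Hw Hs Hp. destruct (nf n u Hw Hs) as [l [p [H1 [H2 H3]]]]. exists l. split. auto.
  assert (E : eqv n (map Rl p) []).
  { apply (cox n n (le_n n)). auto. intros x Hx. transitivity (permOf u x); [|apply Hp; auto].
    rewrite (perm_eqv n _ _ H3 x). rewrite permOf_app, permOf_G. reflexivity. }
  rewrite H3, E, app_nil_r. reflexivity.
Qed.

Lemma perm_phiHT w x : permOf (phiHT w) x = permOf w x.
Proof. induction w as [|a w IH]; simpl. reflexivity. unfold phiHT in *. simpl.
  destruct a as [[i|i|i] b]; simpl; rewrite IH; reflexivity. Qed.

Lemma wf_phiHT n w : wf n w -> wf n (phiHT w).
Proof. unfold wf, phiHT. intro H. apply Forall_forall. intros x Hx. apply filter_In in Hx.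
  destruct Hx. eapply Forall_forall in H; eauto. Qed.
Lemma nosig_phiHT w : nosig (phiHT w).
Proof. unfold nosig, phiHT. apply Forall_forall. intros x Hx. apply filter_In in Hx.
  destruct Hx as [_ H]. destruct (is_sigma x); simpl in *; congruence. Qed.

Lemma phiHT_R l : phiHT (map Rl l) = map Rl l.
Proof. induction l; simpl; auto. unfold phiHT in *. simpl. rewrite IHl. reflexivity. Qed.

Lemma phiHT_psiH n : is_psiH n phiHT.
Proof.
  split. { intros; apply phiHT_eqv; auto. }
  split. { intros; rewrite phiHT_app; reflexivity. }
  split.
  { intros w [Hw Hp]. destruct (triv n (phiHT w) (wf_phiHT n w Hw) (nosig_phiHT w)) as [l [H1 H2]].
    { intros x Hx. rewrite perm_phiHT. auto. }
    exists (map Gl l). split. apply wf_G; auto. split.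
    apply Forall_forall. intros x Hx. apply in_map_iff in Hx. destruct Hx as [j [<- _]]. exact I.
    exact H2. }
  split.
  { intros i j Hi Hij Hj. split.
    - rewrite xup_eq, phiHT_app. simpl. unfold phiHT at 2. simpl. fold (phiHT (map Rl (U (i+1) j))).
      rewrite !phiHT_R. unfold P. pose proof (R_cancel n (U (i+1) j) []) as E. rewrite app_nil_r in E.
      apply E. intros k Hk; apply U_in in Hk; lia.
    - rewrite xdown_eq, phiHT_app. simpl. unfold phiHT at 2. simpl. fold (phiHT (map Rl (U i j))).
      rewrite !phiHT_R. unfold P. pose proof (R_cancel n (U i j) []) as E. rewrite app_nil_r in E.
      apply E. intros k Hk; apply U_in in Hk; lia. }
  intros j Hj. reflexivity.
Qed.

Lemma TVH_app n u v : TVH n u -> TVH n v -> TVH n (u ++ v).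
Proof. intros [H1 H2] [H3 H4]. split. apply wf_app; auto. intros k Hk. rewrite permOf_app, H4, H2; auto. Qed.
Lemma TVH_nil n : TVH n [].
Proof. split. constructor. reflexivity. Qed.
Lemma TVH_G n l : (forall j, In j l -> 1 <= j <= n) -> TVH n (map Gl l).
Proof. intros. split. apply wf_G; auto. intros; apply permOf_G. Qed.

Lemma perm_rev_cancel l x : permOf (map Rl (rev l)) (permOf (map Rl l) x) = x.
Proof. induction l as [|a l IH]; simpl. reflexivity. rewrite map_app, permOf_app. simpl.
  unfold act; simpl. rewrite swap_swap. apply IH. Qed.

Lemma TVH_X n x : X n x -> TVH n x.
Proof.
  intros [i [j [H1 [H2 [H3 [-> | ->]]]]]].
  - rewrite xup_eq. split. apply wf_app. apply wf_R. intros k Hk; apply P_in in Hk; lia.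
    constructor. simpl; lia. apply wf_R. intros k Hk; apply U_in in Hk; lia.
    intros k _. rewrite permOf_app. simpl. apply perm_rev_cancel.
  - rewrite xdown_eq. split. apply wf_app. apply wf_R. intros k Hk; apply P_in in Hk; lia.
    constructor. simpl; lia. apply wf_R. intros k Hk; apply U_in in Hk; lia.
    intros k _. rewrite permOf_app. simpl. apply perm_rev_cancel.
Qed.

Lemma psi_nil n psi : is_psiH n psi -> eqv n (psi []) [].
Proof.
  intros [Hr [Hh _]]. pose proof (Hh [] [] (TVH_nil n) (TVH_nil n)) as H. simpl in H.
  set (a := psi []) in *.
  symmetry. transitivity (inv a ++ a ++ []). symmetry. apply inv_cancel'.
  transitivity (inv a ++ (a ++ a) ++ []). apply eqv_app_l, eqv_app_r. exact H.
  rewrite <- app_assoc. rewrite inv_cancel'. rewrite app_nil_r. reflexivity.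
Qed.

Lemma psi_G n psi l : is_psiH n psi -> (forall j, In j l -> 1 <= j <= n) -> eqv n (psi (map Gl l)) (map Gl l).
Proof.
  intros Hp. pose proof Hp as [Hr [Hh [_ [_ Hg]]]]. induction l as [|j l IH]; intros Hl.
  - apply psi_nil; auto.
  - change (map Gl (j :: l)) with ([Gl j] ++ map Gl l).
    rewrite Hh. rewrite IH. change [Gl j] with (g j). rewrite Hg. reflexivity.
    apply Hl; left; auto. intros; apply Hl; right; auto.
    apply (TVH_G n [j]). intros k [<-|[]]. apply Hl; left; auto.
    apply TVH_G. intros; apply Hl; right; auto.
Qed.

Definition HLp n psi z := TVH n z /\ eqv n (psi z) [].

Lemma HL_app n psi u v : is_psiH n psi -> HLp n psi u -> HLp n psi v -> HLp n psi (u ++ v).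
Proof. intros [Hr [Hh _]] [H1 H2] [H3 H4]. split. apply TVH_app; auto.
  rewrite Hh by auto. rewrite H2, H4. reflexivity. Qed.

Lemma wf_inv n z : wf n z -> wf n (inv z).
Proof. unfold wf, inv. intro H. apply Forall_rev. apply Forall_map.
  eapply Forall_impl; [|exact H]. intros [a b]; simpl; auto. Qed.

Lemma HL_inv n psi z : is_psiH n psi -> HLp n psi z -> HLp n psi (inv z).
Proof.
  intros Hp [[Hw Hq] H2]. pose proof Hp as [Hr [Hh _]].
  assert (T : TVH n (inv z)).
  { split. apply wf_inv; auto. intros k Hk.
    pose proof (perm_eqv n _ _ (inv_cancel' n z []) k) as E. rewrite app_nil_r, permOf_app in E.
    simpl in E. rewrite Hq in E; auto. }
  split. exact T.
  assert (E1 : eqv n (psi (z ++ inv z)) (psi [])).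
  { apply Hr. apply TVH_app; auto. split; auto. apply TVH_nil.
    pose proof (inv_cancel n z []) as E. rewrite app_nil_r in E. exact E. }
  rewrite (Hh z (inv z) (conj Hw Hq) T) in E1. rewrite H2, (psi_nil n psi Hp) in E1. exact E1.
Qed.

Definition Cc n u := wf n u /\ exists l x, (forall j, In j l -> 1 <= j <= n) /\ X n x /\
  eqv n u (map Gl l ++ x ++ map Gl (rev l)).

Lemma C_HL n psi u : is_psiH n psi -> Cc n u -> HLp n psi u.
Proof.
  intros Hp [Hw [l [x [H1 [H2 H3]]]]]. pose proof Hp as [Hr [Hh [_ [Hx _]]]].
  assert (Hl' : forall j, In j (rev l) -> 1 <= j <= n) by (intros j Hj; apply H1, in_rev; auto).
  assert (TX := TVH_X n x H2).
  assert (TV : TVH n (map Gl l ++ x ++ map Gl (rev l))).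
  { apply TVH_app. apply TVH_G; auto. apply TVH_app; auto. apply TVH_G; auto. }
  assert (TU : TVH n u).
  { split; auto. intros k Hk. rewrite (perm_eqv n _ _ H3 k). apply TV; auto. }
  split; auto. rewrite (Hr _ _ TU TV H3).
  rewrite Hh; [|apply TVH_G; auto|apply TVH_app; auto; apply TVH_G; auto].
  rewrite Hh; [|auto|apply TVH_G; auto].
  assert (E : eqv n (psi x) []).
  { destruct H2 as [i [j [a1 [a2 [a3 [-> | ->]]]]]]; apply Hx; auto. }
  rewrite E, !psi_G by auto. simpl. pose proof (G_cancel' n l [] H1) as G. rewrite app_nil_r in G. exact G.
Qed.

Lemma map_swap_swap m l : map (swap m) (map (swap m) l) = l.
Proof. rewrite map_map. rewrite (map_ext _ (fun x => x)) by apply swap_swap. apply map_id. Qed.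

Lemma C_conj n a u : valid_gen n (fst a) -> is_sigma a = false -> Cc n u -> Cc n ([a] ++ u ++ [flip a]).
Proof.
  intros Ha Hs [Hw [l [x [H1 [H2 H3]]]]].
  split. { apply wf_app. constructor; auto. apply wf_app; auto. constructor; auto. }
  destruct a as [[i|i|i] b]; simpl in Ha, Hs; try discriminate.
  - assert (E0 : eqv n ([(Rh i, b)] ++ u ++ [flip (Rh i, b)]) (Rl i :: u ++ [Rl i])).
    { destruct b; simpl. rewrite rinv by auto. reflexivity. rewrite (rinv n i []) by auto. reflexivity. }
    destruct (rx n i x (map Gl (map (swap i) (rev l))) Ha H2) as [x' [Hx' Ex]].
    exists (map (swap i) l), x'. split.
    { intros j Hj. apply in_map_iff in Hj. destruct Hj as [j0 [<- Hj0]]. apply swap_range; auto. }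
    split; auto. rewrite E0, H3. rewrite <- !app_assoc. rewrite rho_GW by auto.
    assert (Hl' : forall j, In j (map (swap i) (rev l)) -> 1 <= j <= n).
    { intros j Hj. apply in_map_iff in Hj. destruct Hj as [j0 [<- Hj0]]. apply swap_range; auto. apply H1, in_rev; auto. }
    pose proof (rho_GW n i (map (swap i) (rev l)) [] Ha Hl') as G. rewrite map_swap_swap in G.
    rewrite <- G. rewrite app_nil_r. rewrite Ex. rewrite map_rev. reflexivity.
  - assert (E0 : eqv n ([(Ga i, b)] ++ u ++ [flip (Ga i, b)]) (Gl i :: u ++ [Gl i])).
    { destruct b; simpl. rewrite ginv by auto. reflexivity. rewrite (ginv n i []) by auto. reflexivity. }
    exists (i :: l), x. split. { intros j [<-|Hj]; auto. } split; auto.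
    rewrite E0, H3. simpl. rewrite map_app, <- !app_assoc. reflexivity.
Qed.

Lemma inv_cons a q : inv (a :: q) = inv q ++ [flip a].
Proof. reflexivity. Qed.

Lemma K1 n i q : 1 <= i <= n - 1 -> wf n q -> nosig q -> Cc n (q ++ [Sl i] ++ inv q).
Proof.
  intros Hi. induction q as [|a q IH]; intros Hw Hs.
  - change ([] ++ [Sl i] ++ inv []) with [Sl i].
    split. constructor. simpl; lia. constructor. exists [], (x_up i (i+1)). split. simpl; tauto. split.
    exists i, (i+1). repeat split; auto; lia. rewrite xup1. reflexivity.
  - inversion Hw; inversion Hs; subst.
    replace ((a :: q) ++ [Sl i] ++ inv (a :: q)) with ([a] ++ (q ++ [Sl i] ++ inv q) ++ [flip a]).
    apply C_conj; auto. rewrite inv_cons. simpl. rewrite <- !app_assoc. reflexivity.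
Qed.

Lemma decomp n psi w : is_psiH n psi -> wf n w -> exists z, HLp n psi z /\ eqv n w (z ++ phiHT w).
Proof.
  intros Hp. induction w as [|a w IH] using rev_ind; intros Hw.
  - exists []. split. split. apply TVH_nil. apply psi_nil; auto. reflexivity.
  - apply wf_app_inv in Hw. destruct Hw as [Hw Ha]. destruct (IH Hw) as [z [Hz Ez]].
    rewrite phiHT_app.
    inversion Ha as [|? ? Ha0]; subst.
    destruct (is_sigma a) eqn:Es.
    + destruct a as [[i|i|i] b]; simpl in Es; try discriminate. simpl in Ha0.
      set (q := phiHT w).
      assert (Hc : HLp n psi (q ++ [(Sg i, b)] ++ inv q)).
      { assert (Cq : Cc n (q ++ [Sl i] ++ inv q)) by (apply K1; auto; [apply wf_phiHT; auto | apply nosig_phiHT]).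
        destruct b. 
        - replace (q ++ [(Sg i, true)] ++ inv q) with (inv (q ++ [Sl i] ++ inv q)).
          apply HL_inv; auto. apply C_HL; auto.
          rewrite !inv_app, inv_inv. rewrite app_assoc. reflexivity.
        - apply C_HL; auto. }
      exists (z ++ (q ++ [(Sg i, b)] ++ inv q)). split. apply HL_app; auto.
      transitivity ((z ++ q) ++ [(Sg i, b)]). apply eqv_app_r; exact Ez. change (phiHT [(Sg i, b)]) with (@nil letter). rewrite app_nil_r. rewrite <- !app_assoc.
      apply eqv_app_l, eqv_app_l. simpl. apply cons_Proper. symmetry.
      pose proof (inv_cancel' n q []) as E. rewrite app_nil_r in E. exact E.
    + exists z. split; auto. transitivity ((z ++ phiHT w) ++ [a]). apply eqv_app_r; exact Ez. unfold phiHT at 2. simpl. rewrite Es. simpl. rewrite app_assoc. reflexivity.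
Qed.

Theorem mainTheorem19 (n : nat) (hn : 2 <= n) :
  (exists psi, is_psiH n psi) /\
  (forall psi, is_psiH n psi -> subgroup_iso n (HT n) (HL n psi)).
Proof.
  split. { exists phiHT. apply phiHT_psiH. }
  intros psi Hp. pose proof Hp as [Hr [Hh _]].
  assert (TQ : forall w, TVH n w -> TVH n (phiHT w)).
  { intros w [Hw Hq]. split. apply wf_phiHT; auto. intros k Hk. rewrite perm_phiHT; auto. }
  exists (fun w => w). split; [|split; [|split; [|split]]].
  - intros w [Hw He]. assert (T : TVH n w).
    { split; auto. intros k Hk. rewrite <- perm_phiHT. rewrite (perm_eqv n _ _ He k). reflexivity. }
    split; auto. destruct (decomp n psi w Hp Hw) as [z [[Tz Hz] Ez]].
    rewrite (Hr _ _ T (TVH_app n _ _ Tz (TQ w T)) Ez). rewrite Hh by auto. rewrite Hz.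
    simpl. rewrite (Hr _ _ (TQ w T) (TVH_nil n) He). apply psi_nil; auto.
  - intros; auto.
  - intros; reflexivity.
  - intros; auto.
  - intros v [T Hv]. exists v. split; [|reflexivity]. split. apply T.
    destruct (decomp n psi v Hp (proj1 T)) as [z [[Tz Hz] Ez]].
    assert (E1 : eqv n (psi (phiHT v)) []).
    { rewrite <- Hv. rewrite (Hr _ _ T (TVH_app n _ _ Tz (TQ v T)) Ez). rewrite Hh by auto.
      rewrite Hz. reflexivity. }
    destruct (triv n (phiHT v) (wf_phiHT n v (proj1 T)) (nosig_phiHT v)) as [l [Hl El]].
    { intros x Hx. rewrite perm_phiHT. apply T; auto. }
    rewrite (Hr _ _ (TQ v T) (TVH_G n l Hl) El) in E1. rewrite psi_G in E1 by auto.
    rewrite El. exact E1.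
Qed.
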